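(* Fix $z\in\{0,1\}$ and consider the program (P$_c$): minimize $\sum_{ij:Z_{ij}=z}c_{ij}\psi(w_{ij})$ over weights on the study units with $Z_{ij}=z$, subject to $\bigl|\sum_{ij:Z_{ij}=z}w_{ij}B_k(X_{ij})-B^*_k\bigr|\le\delta_k$ for $k=1,\dots,K$ and $w_{ij}\ge0$. Then: (a) The Lagrange dual problem of (P$_c$) is equivalent to the $L_1$-regularized empirical loss minimization $\min_{u\ge0,\lambda\in\mathbb{R}^K}\ \sum_{ij\in\mathcal{Q}}\bigl[-1\{Z_{ij}=z\}S_{ij}c_{ij}\rho\{(B(X_{ij})^\top\lambda-u_{ij})/c_{ij}\}\bigr]+(B^* )^\top\lambda+|\lambda|^\top\delta$. (b) If $\hat w^{*+}_z$ and $\lambda^\dagger_z$ are solutions of the primal problem (P$_c$) and of the dual problem in (a) respectively, then for every $ij$ with $Z_{ij}=z$ (in the study sample), $\hat w^{*+}_{z,ij}=\rho'\{B(X_{ij})^\top\lambda^\dagger_z/c_{ij}\}\,1\bigl[\rho'\{B(X_{ij})^\top\lambda^\dagger_z/c_{ij}\}>0\bigr]$.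
   Context: The combined sample consists of $n$ study units and $n^*$ target units; $\sum_{ij\in\mathcal{Q}}$ sums over all of them and $S_{ij}=1$ for study units, $S_{ij}=0$ for target units. Study unit $ij$ has binary treatment $Z_{ij}$ and covariates $X_{ij}$; all sums $\sum_{ij:Z_{ij}=z}$ are over study units. $B=(B_1,\dots,B_K)^\top$ are basis functions with $B_1\equiv1$; $B^*=(n^* )^{-1}\sum_{\text{target units}}B(X_{ij})$; $\delta=(\delta_k)$ with $\delta_k\ge0$, $\delta_1=0$; $|\lambda|$ is the componentwise absolute value. $c_{ij}>0$ are scaling factors. $\psi$ is convex, twice differentiable, with $\psi'$ invertible. Let $h(x)=\psi(-x)$ and $\rho(v)=-v(h')^{-1}(v)+h\{(h')^{-1}(v)\}$, so that $\rho'(v)=-(h')^{-1}(v)$. *)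

(* Defs.v *)
From HB Require Import structures.
From mathcomp Require Import all_boot all_order all_algebra.
From mathcomp Require Import all_classical all_reals all_analysis.
Set Implicit Arguments. Unset Strict Implicit. Unset Printing Implicit Defensive.
Import Order.TTheory GRing.Theory Num.Theory.
Local Open Scope ring_scope.

Section Defs.
Variables (R : realType) (I : finType) (T : Type) (K : nat).
(* combined sample Q = I; S i = study indicator; Z i = treatment; X i = covariates *)
Variables (S Z : I -> bool) (X : I -> T) (B : 'I_K.+1 -> T -> R)
          (c : I -> R) (delta : 'I_K.+1 -> R) (z : bool).

Definition sel (i : I) : bool := S i && (Z i == z).

Definition Bstar (k : 'I_K.+1) : R :=
  (#|[pred i | ~~ S i]|%:R)^-1 * \sum_(i | ~~ S i) B k (X i).

Definition Blam (lam : 'I_K.+1 -> R) (i : I) : R := \sum_k B k (X i) * lam k.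

Definition primal_obj (psi : R -> R) (w : I -> R) : R :=
  \sum_(i | sel i) c i * psi (w i).

Definition primal_feasible (w : I -> R) : Prop :=
  (forall k, `|\sum_(i | sel i) w i * B k (X i) - Bstar k| <= delta k) /\
  (forall i, sel i -> 0 <= w i).

Definition primal_solution (psi : R -> R) (w : I -> R) : Prop :=
  primal_feasible w /\
  forall w', primal_feasible w' -> primal_obj psi w <= primal_obj psi w'.

(* Lagrangian: constraints written as
     sum w B_k - B*_k - delta_k <= 0    (multiplier al k >= 0)
   - sum w B_k + B*_k - delta_k <= 0    (multiplier be k >= 0)
   - w_i <= 0   for selected i          (multiplier u i >= 0) *)
Definition lagrangian (psi : R -> R) (w : I -> R)
    (al be : 'I_K.+1 -> R) (u : I -> R) : R :=
  primal_obj psi w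
  + \sum_k al k * (\sum_(i | sel i) w i * B k (X i) - Bstar k - delta k)
  + \sum_k be k * (- (\sum_(i | sel i) w i * B k (X i)) + Bstar k - delta k)
  - \sum_(i | sel i) u i * w i.

Definition dual_fun (psi : R -> R) (al be : 'I_K.+1 -> R) (u : I -> R)
    : \bar R :=
  ereal_inf [set (lagrangian psi w al be u)%:E | w in [set: I -> R]].

Definition dual_feasible (al be : 'I_K.+1 -> R) (u : I -> R) : Prop :=
  (forall k, 0 <= al k) /\ (forall k, 0 <= be k) /\ (forall i, 0 <= u i).

Definition dual_value (psi : R -> R) : \bar R :=
  ereal_sup [set dual_fun psi p.1.1 p.1.2 p.2 |
             p in [set p | dual_feasible p.1.1 p.1.2 p.2]].

Definition dual_solution (psi : R -> R) al be u : Prop :=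
  dual_feasible al be u /\
  forall al' be' u', dual_feasible al' be' u' ->
    (dual_fun psi al' be' u' <= dual_fun psi al be u)%E.

(* h(x) = psi(-x), rho(v) = -v (h')^{-1}(v) + h((h')^{-1}(v)) *)
Definition hfun (psi : R -> R) (x : R) : R := psi (- x).
Definition rho (psi : R -> R) (hinv : R -> R) (v : R) : R :=
  - v * hinv v + hfun psi (hinv v).

Definition loss (psi hinv : R -> R) (lam : 'I_K.+1 -> R) (u : I -> R) : R :=
  \sum_i (- ((Z i == z)%:R * (S i)%:R * c i
             * rho psi hinv ((Blam lam i - u i) / c i)))
  + \sum_k Bstar k * lam k + \sum_k `|lam k| * delta k.

Definition loss_solution (psi hinv : R -> R) lam u : Prop :=
  (forall i, 0 <= u i) /\
  forall lam' u', (forall i, 0 <= u' i) -> loss psi hinv lam u <= loss psi hinv lam' u'.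

Definition loss_value (psi hinv : R -> R) : \bar R :=
  ereal_inf [set (loss psi hinv p.1 p.2)%:E | p in [set p | forall i, 0 <= p.2 i]].

End Defs.

(* Main.v *)
Require Import Defs.
From HB Require Import structures.
From mathcomp Require Import all_boot all_order all_algebra.
From mathcomp Require Import all_classical all_reals all_analysis.
Import Order.TTheory GRing.Theory Num.Theory.
Local Open Scope ring_scope.


Import numFieldNormedType.Exports.
From mathcomp.algebra_tactics Require Import ring lra.

Section A.
Local Open Scope classical_set_scope.
Variable R : realType.
Implicit Types (f : R -> R).

Lemma dnbhs_right {l : R} {f} : f @ 0^' --> l -> f @ 0^'+ --> l.
Proof.
move=> H; apply: cvg_trans H; apply: cvg_fmap2.
apply: within_subset => y /= y0; exact: lt0r_neq0.
Qed.

Lemma dnbhs_left {l : R} {f} : f @ 0^' --> l -> f @ 0^'- --> l.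
Proof.
move=> H; apply: cvg_trans H; apply: cvg_fmap2.
apply: within_subset => y /= y0; exact: ltr0_neq0.
Qed.

Lemma le_at_right f (C : R) : f @ 0^'+ --> f 0 ->
  (forall t, 0 < t <= 1 -> f t <= C) -> f 0 <= C.
Proof.
move=> H hf; rewrite leNgt; apply/negP => hC.
have h1 := @cvgr_gt _ _ _ (at_right_proper_filter 0) _ _ H _ hC.
have h2 := nbhs_right_gt (0:R).
have h3 := nbhs_right_le (@ltr01 R).
have [t [[ft t0] t1]] := filter_ex (filterI (filterI h1 h2) h3).
by have := hf t; rewrite t0 t1 => /(_ isT); rewrite leNgt ft.
Qed.

Lemma derivable_q f x : derivable f x 1 ->
  (fun h => h^-1 * (f (h + x) - f x)) @ 0^' --> derive1 f x.
Proof.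
move=> df; rewrite derive1E /derive.
have -> : (fun h => h^-1 * (f (h + x) - f x)) =
  (fun h => h^-1 *: ((f \o shift x) (h *: 1) - f x)).
  by apply/funext => h /=; rewrite -[h *: _]/(h * 1) mulr1.
exact: df.
Qed.


Lemma lim_le_near {T} {F : set_system T} {PF : ProperFilter F} (g : T -> R) l C :
  g @ F --> l -> (\forall t \near F, g t <= C) -> l <= C.
Proof.
move=> H hg; rewrite leNgt; apply/negP => hC.
have h1 := @cvgr_gt _ _ _ PF _ _ H _ hC.
have [t [ft gt]] := filter_ex (filterI h1 hg).
by move: gt; rewrite leNgt ft.
Qed.

Lemma lim_ge_near {T} {F : set_system T} {PF : ProperFilter F} (g : T -> R) l C :
  g @ F --> l -> (\forall t \near F, C <= g t) -> C <= l.
Proof.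
move=> H hg; rewrite leNgt; apply/negP => hC.
have h1 := @cvgr_lt _ _ _ PF _ _ H _ hC.
have [t [ft gt]] := filter_ex (filterI h1 hg).
by move: gt; rewrite leNgt ft.
Qed.

Variable psi : R -> R.
Hypothesis hconv : forall (x y t : R), 0 <= t <= 1 ->
        psi (t * x + (1 - t) * y) <= t * psi x + (1 - t) * psi y.
Hypothesis hdiff1 : forall x, derivable psi x 1.

Lemma secant_le x y h : 0 < h / (y - x) <= 1 -> y != x ->
  psi (h + x) - psi x <= h / (y - x) * (psi y - psi x).
Proof.
move=> /andP[t0 t1] yx.
have := hconv y x (h / (y - x)); rewrite (ltW t0) t1 => /(_ isT).
have -> : h / (y - x) * y + (1 - h / (y - x)) * x = h + x.
  by field; rewrite subr_eq0.
move=> H; apply: le_trans (lerB H (lexx _)) _; rewrite le_eqVlt; apply/orP; left; apply/eqP; ring.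
Qed.

Lemma tangent x y : psi x + derive1 psi x * (y - x) <= psi y.
Proof.
have q := @derivable_q psi x (hdiff1 x).
case: (ltgtP x y) => [xy|yx|<-]; last by rewrite subrr mulr0 addr0.
- have : derive1 psi x <= (psi y - psi x) / (y - x).
    apply: lim_le_near (dnbhs_right q) _.
    near=> h.
    have h0 : 0 < h by near: h; exact: nbhs_right_gt.
    have hl : h < y - x by near: h; apply: nbhs_right_lt; rewrite subr_gt0.
    have yx0 : 0 < y - x by rewrite subr_gt0.
    have := secant_le x y h.
    rewrite divr_gt0 // ler_pdivrMr // mul1r (ltW hl) gt_eqF // => /(_ isT isT).
    move=> H.
    rewrite -(ler_pM2l h0) mulrA mulfV ?gt_eqF // mul1r.
    by apply: le_trans H _; rewrite mulrAC -mulrA mulrC.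
  rewrite ler_pdivlMr ?subr_gt0 // => H; lra.
- have : (psi y - psi x) / (y - x) <= derive1 psi x.
    apply: lim_ge_near (dnbhs_left q) _.
    near=> h.
    have h0 : h < 0 by near: h; exact: nbhs_left_lt.
    have hl : y - x < h by near: h; apply: nbhs_left_gt; rewrite subr_lt0.
    have yx0 : y - x < 0 by rewrite subr_lt0.
    have ht : h / (y - x) * (y - x) = h by field; rewrite lt_eqF.
    have t0 : 0 < h / (y - x) by nra.
    have t1 : h / (y - x) <= 1 by nra.
    have := secant_le x y h.
    rewrite t0 t1 lt_eqF // => /(_ isT isT) H.
    rewrite -(ler_nM2l h0) mulrA mulfV ?lt_eqF // mul1r.
    by apply: le_trans H _; rewrite mulrAC -mulrA mulrC.
  have : (psi y - psi x) / (y - x) * (y - x) = psi y - psi x.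
    by field; rewrite lt_eqF // subr_lt0.
  move=> E H; have yx0 : y - x < 0 by rewrite subr_lt0.
  nra.
Unshelve. all: by end_near.
Qed.
End A.

Section B.
Local Open Scope classical_set_scope.
Variable R : realType.
Variables (psi hinv : R -> R).
Hypothesis hconv : forall (x y t : R), 0 <= t <= 1 ->
        psi (t * x + (1 - t) * y) <= t * psi x + (1 - t) * psi y.
Hypothesis hdiff1 : forall x, derivable psi x 1.
Hypothesis hinv_l : cancel (derive1 (hfun psi)) hinv.
Hypothesis hinv_r : cancel hinv (derive1 (hfun psi)).

Let d := derive1 psi.

Lemma hderiv x : derive1 (hfun psi) x = - d (- x).
Proof.
rewrite /hfun.
have -> : (fun x => psi (- x)) = psi \o -%R by [].
rewrite derive1_comp; last 2 first.
- exact: (@derivable_opp R x 1).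
- exact: (hdiff1 (- x)).
have -> : (-%R : R -> R) = - id by apply/funext.
by rewrite derive1N ?derive1_id ?mulrN1 //; exact: derivable_id.
Qed.

Lemma tang x y : psi x + d x * (y - x) <= psi y.
Proof. exact: tangent. Qed.

Lemma d_le x y : x <= y -> d x <= d y.
Proof.
move=> xy; have h1 := tang x y; have h2 := tang y x.
rewrite le_eqVlt in xy; case/orP: xy => [/eqP -> //|xy].
nra.
Qed.

Lemma d_inj : injective d.
Proof.
move=> a b E; have : derive1 (hfun psi) (- a) = derive1 (hfun psi) (- b).
  by rewrite !hderiv !opprK E.
by move/(can_inj hinv_l)/oppr_inj.
Qed.

Lemma d_lt x y : x < y -> d x < d y.
Proof.
move=> xy; rewrite lt_neqAle d_le ?ltW // andbT.
by apply/negP => /eqP /d_inj E; move: xy; rewrite E ltxx.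
Qed.

Lemma tang_strict x y : x != y -> psi x + d x * (y - x) < psi y.
Proof.
move=> xy; set m := (x + y) / 2.
have h1 := tang x m; have h2 := tang m y.
case: (ltgtP x y) xy => // [lt|gt] _.
- have xm : x < m by rewrite /m; lra.
  have := d_lt _ _ xm => dd.
  have : m - x > 0 by lra.
  have : y - m > 0 by rewrite /m; lra.
  move=> p1 p2.
  have : d x * (y - m) < d m * (y - m) by rewrite ltr_pM2r.
  rewrite /m in h1 h2 p1 p2 * => H. nra.
- have xm : m < x by rewrite /m; lra.
  have := d_lt _ _ xm => dd.
  have : x - m > 0 by lra.
  have : m - y > 0 by rewrite /m; lra.
  move=> p1 p2.
  have : d m * (m - y) < d x * (m - y) by rewrite ltr_pM2r.
  rewrite /m in h1 h2 p1 p2 * => H. nra.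
Qed.

Definition wst v := - hinv v.

Lemma d_wst v : d (wst v) = - v.
Proof. by rewrite /wst; apply: oppr_inj; rewrite opprK -hderiv hinv_r. Qed.

Lemma rho_eq v : rho psi hinv v = psi (wst v) + v * wst v.
Proof. rewrite /rho /hfun /wst; ring. Qed.

Lemma rho_min v y : rho psi hinv v <= psi y + v * y.
Proof. rewrite rho_eq; have := tang (wst v) y; rewrite d_wst; lra. Qed.

Lemma rho_min_strict v y : y != wst v -> rho psi hinv v < psi y + v * y.
Proof.
rewrite eq_sym => ne; rewrite rho_eq; have := tang_strict _ _ ne; rewrite d_wst; lra.
Qed.

Lemma rho_super v v' : (v' - v) * wst v' <= rho psi hinv v' - rho psi hinv v.
Proof. have := rho_min v (wst v'); rewrite (rho_eq v'); lra. Qed.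

Lemma hinv_lt v v' : v < v' -> hinv v < hinv v'.
Proof.
move=> vv; rewrite ltNge; apply/negP => H.
have : derive1 (hfun psi) (hinv v') <= derive1 (hfun psi) (hinv v).
  by rewrite !hderiv lerN2; apply: d_le; rewrite lerN2.
by rewrite !hinv_r leNgt vv.
Qed.

Lemma hinv_cont v : hinv @ v --> hinv v.
Proof.
apply/cvgrPdist_lt => e e0.
set x0 := hinv v.
set a := derive1 (hfun psi) (x0 - e).
set b := derive1 (hfun psi) (x0 + e).
have hmono : forall p q, p < q -> derive1 (hfun psi) p < derive1 (hfun psi) q.
  by move=> p q pq; rewrite !hderiv ltrN2; apply: d_lt; rewrite ltrN2.
have av : a < v by rewrite -[v](hinv_r) hmono // /x0; lra.
have vb : v < b by rewrite -[v](hinv_r) hmono // /x0; lra.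
have : v \in `]a, b[%R by rewrite in_itv /= av vb.
move/near_in_itvoo; apply: filterS => y; rewrite in_itv /= => /andP[ay yb].
have := hinv_lt _ _ ay; have := hinv_lt _ _ yb; rewrite /a /b !hinv_l -/x0 => h1 h2.
rewrite ltr_norml; apply/andP; split; lra.
Qed.


Variables (I : finType) (T : Type) (K : nat).
Variables (S Z : I -> bool) (X : I -> T) (B : 'I_K.+1 -> T -> R)
          (c : I -> R) (delta : 'I_K.+1 -> R) (z : bool).
Hypothesis hdelta : forall k, 0 <= delta k.
Hypothesis hc : forall i, 0 < c i.

Local Notation sl := (sel S Z z).
Local Notation Bs := (Bstar S X B).
Local Notation BL := (Blam X B).

Definition vv (lam : 'I_K.+1 -> R) (u : I -> R) i := (BL lam i - u i) / c i.

Lemma loss_eq lam u : loss S Z X B c delta z psi hinv lam u =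
  - (\sum_(i | sl i) c i * rho psi hinv (vv lam u i))
  + \sum_k Bs k * lam k + \sum_k `|lam k| * delta k.
Proof.
rewrite /loss; congr (_ + _ + _).
rewrite sumrN; congr (- _); rewrite [RHS]big_mkcond; apply: eq_bigr => i _.
rewrite /sel /vv; case: (S i); case: (Z i == z) => /=; rewrite ?mul1r ?mul0r //.
Qed.

Definition GG (w : I -> R) k := \sum_(i | sl i) w i * B k (X i).

Lemma BL_exchange (w : I -> R) lam :
  \sum_(i | sl i) w i * BL lam i = \sum_k lam k * GG w k.
Proof.
rewrite /Blam /GG.
under eq_bigr do rewrite mulr_sumr.
rewrite exchange_big /=; apply: eq_bigr => k _; rewrite mulr_sumr.
by apply: eq_bigr => i _; ring.
Qed.

Lemma lagr_eq w al be u : lagrangian S Z X B c delta z psi w al be u =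
  \sum_(i | sl i) c i * (psi (w i) + vv (fun k => al k - be k) u i * w i)
  - \sum_k Bs k * (al k - be k) - \sum_k (al k + be k) * delta k.
Proof.
rewrite /lagrangian /primal_obj.
have E1 : \sum_k al k * (GG w k - Bs k - delta k)
        + \sum_k be k * (- GG w k + Bs k - delta k)
     = \sum_k (al k - be k) * GG w k - \sum_k Bs k * (al k - be k)
       - \sum_k (al k + be k) * delta k.
  by rewrite -big_split -!sumrB /=; apply: eq_bigr => k _; ring.
rewrite /GG in E1.
rewrite -[_ + _ + \sum_k be k * _]addrA E1 -BL_exchange.
have E3 : \sum_(i | sl i) c i * (psi (w i) + vv (fun k => al k - be k) u i * w i)
   = \sum_(i | sl i) c i * psi (w i) + \sum_(i | sl i) w i * BL (fun k => al k - be k) i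
     - \sum_(i | sl i) u i * w i.
  rewrite -big_split -sumrB /=; apply: eq_bigr => i _; rewrite /vv.
  by field; rewrite gt_eqF.
rewrite E3; ring.
Qed.

Definition DD al be u := \sum_(i | sl i) c i * rho psi hinv (vv (fun k => al k - be k) u i)
  - \sum_k Bs k * (al k - be k) - \sum_k (al k + be k) * delta k.

Lemma dual_fun_eq al be u : dual_fun S Z X B c delta z psi al be u = (DD al be u)%:E.
Proof.
apply/le_anti/andP; split.
- apply: ge_ereal_inf; exists (DD al be u)%:E => //.
  exists (fun i => wst (vv (fun k => al k - be k) u i)) => //.
  rewrite lagr_eq /DD; congr (_ - _ - _)%:E; apply: eq_bigr => i _.
  by rewrite rho_eq.
- apply: le_ereal_inf_tmp => _ [w _ <-]; rewrite lee_fin lagr_eq /DD.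
  rewrite lerB // lerB //; apply: ler_sum => i _.
  by rewrite ler_pM2l // rho_min.
Qed.


Lemma maxpm (x : R) : Num.max x 0 - Num.max (- x) 0 = x /\ Num.max x 0 + Num.max (- x) 0 = `|x|.
Proof.
rewrite !maxEle oppr_le0; case: (lerP 0 x) => h.
- case: ifP => h'; last by rewrite subr0 addr0 ger0_norm.
  have -> : x = 0 by apply/le_anti; rewrite h h'.
  by rewrite subr0 addr0 normr0.
- rewrite ifT; last exact: ltW.
  by rewrite sub0r opprK add0r ltr0_norm.
Qed.

Lemma DD_le al be u : (forall k, 0 <= al k) -> (forall k, 0 <= be k) ->
  DD al be u <= - loss S Z X B c delta z psi hinv (fun k => al k - be k) u.
Proof.
move=> ha hb; rewrite loss_eq /DD opprD opprD opprK.
suff : \sum_k `|al k - be k| * delta k <= \sum_k (al k + be k) * delta k.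
  move=> H; lra.
apply: ler_sum => k _; rewrite ler_wpM2r //.
by apply: le_trans (ler_normB _ _) _; rewrite !ger0_norm.
Qed.

Lemma DD_pm lam u :
  DD (fun k => Num.max (lam k) 0) (fun k => Num.max (- lam k) 0) u
  = - loss S Z X B c delta z psi hinv lam u.
Proof.
have E : (fun k => Num.max (lam k) 0 - Num.max (- lam k) 0) = lam.
  by apply/funext => k; case: (maxpm (lam k)).
rewrite loss_eq /DD E.
have -> : \sum_k (Num.max (lam k) 0 + Num.max (- lam k) 0) * delta k
   = \sum_k `|lam k| * delta k.
  by apply: eq_bigr => k _; case: (maxpm (lam k)) => _ ->.
have -> : \sum_k Bs k * (Num.max (lam k) 0 - Num.max (- lam k) 0)
   = \sum_k Bs k * lam k.
  by apply: eq_bigr => k _; case: (maxpm (lam k)) => -> _.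
rewrite !opprD opprK; ring.
Qed.

Lemma partA1 : dual_value S Z X B c delta z psi
   = (- loss_value S Z X B c delta z psi hinv)%E.
Proof.
rewrite /loss_value /ereal_inf oppeK.
apply/le_anti/andP; split.
- apply: ge_ereal_sup => _ [[[al be] u] /= [ha [hb hu]] <-].
  apply: le_ereal_sup_tmp.
  exists (- (loss S Z X B c delta z psi hinv (fun k => al k - be k) u)%:E)%E.
    exists (loss S Z X B c delta z psi hinv (fun k => al k - be k) u)%:E => //.
    by exists ((fun k => al k - be k), u).
  by rewrite dual_fun_eq lee_fin DD_le.
- apply: ge_ereal_sup => _ [_ [[lam u] /= hu <-] <-].
  apply: le_ereal_sup_tmp.
  exists (dual_fun S Z X B c delta z psi
     (fun k => Num.max (lam k) 0) (fun k => Num.max (- lam k) 0) u).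
    exists ((fun k => Num.max (lam k) 0), (fun k => Num.max (- lam k) 0), u) => //.
    split => [k|]; first by rewrite le_max lexx orbT.
    by split => // k; rewrite le_max lexx orbT.
  by rewrite dual_fun_eq DD_pm.
Qed.


Lemma partA2 al be u : dual_solution S Z X B c delta z psi al be u ->
  loss_solution S Z X B c delta z psi hinv (fun k => al k - be k) u.
Proof.
move=> [[ha [hb hu]] hopt]; split => // lam' u' hu'.
have H := hopt (fun k => Num.max (lam' k) 0) (fun k => Num.max (- lam' k) 0) u'.
have F : dual_feasible (fun k => Num.max (lam' k) 0) (fun k => Num.max (- lam' k) 0) u'.
  by split => [k|]; [|split => // k]; rewrite le_max lexx orbT.
move: (H F); rewrite !dual_fun_eq lee_fin DD_pm => H'.
have := DD_le al be u ha hb; lra.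
Qed.

Lemma partA3 lam u : loss_solution S Z X B c delta z psi hinv lam u ->
  dual_solution S Z X B c delta z psi
    (fun k => Num.max (lam k) 0) (fun k => Num.max (- lam k) 0) u.
Proof.
move=> [hu hopt]; split.
  by split => [k|]; [|split => // k]; rewrite le_max lexx orbT.
move=> al be u' [ha [hb hu']].
rewrite !dual_fun_eq lee_fin DD_pm.
have := DD_le al be u' ha hb; have := hopt (fun k => al k - be k) u' hu'; lra.
Qed.


Lemma cvg_sumR {U} {F : set_system U} {FF : Filter F} (P : pred I)
   (f : I -> U -> R) (l : I -> R) (r : seq I) :
  (forall i, f i @ F --> l i) ->
  (fun x => \sum_(i <- r | P i) f i x) @ F --> \sum_(i <- r | P i) l i.
Proof.
move=> hf; elim: r => [|a r IH].
  have -> : (fun x => \sum_(i <- [::] | P i) f i x) = fun=> 0.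
    by apply/funext => x; rewrite big_nil.
  rewrite big_nil; exact: cvg_cst.
rewrite big_cons; case: ifP => Pa.
  have -> : (fun x => \sum_(i <- a :: r | P i) f i x) =
     (f a + (fun x => \sum_(i <- r | P i) f i x)).
    by apply/funext => x; rewrite big_cons Pa.
  exact: cvgD.
have -> : (fun x => \sum_(i <- a :: r | P i) f i x) =
     (fun x => \sum_(i <- r | P i) f i x).
  by apply/funext => x; rewrite big_cons Pa.
exact: IH.
Qed.

Lemma term_cont (v b a : R) :
  (fun t => wst (v + t * b) * a) @ 0 --> wst (v + 0 * b) * a.
Proof.
rewrite /wst.
have h1 : (fun t => v + t * b) @ 0 --> v + 0 * b.
  apply: cvgD; first exact: cvg_cst.
  apply: cvgMr_tmp; exact: cvg_id.
rewrite mul0r addr0 in h1.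
apply: cvgMr_tmp; apply: cvgN.
rewrite mul0r addr0; exact: (cvg_comp _ _ h1 (hinv_cont v)).
Qed.

Lemma BL_lin lam dl t i : BL (fun k => lam k + t * dl k) i = BL lam i + t * BL dl i.
Proof.
by rewrite /Blam mulr_sumr -big_split; apply: eq_bigr => k _ /=; ring.
Qed.

Lemma dirG lam u dl du M :
  loss_solution S Z X B c delta z psi hinv lam u ->
  (forall t, 0 < t <= 1 -> forall i, 0 <= u i + t * du i) ->
  (forall t, 0 < t <= 1 -> \sum_k `|lam k + t * dl k| * delta k
        - \sum_k `|lam k| * delta k <= t * M) ->
  \sum_(i | sl i) wst (vv lam u i) * (BL dl i - du i) <= \sum_k Bs k * dl k + M.
Proof.
move=> [hu hopt] hdu hM.
set a := fun i => BL dl i - du i.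
pose F := fun t => \sum_(i | sl i) wst (vv lam u i + t * (a i / c i)) * a i.
have F0 : F 0 = \sum_(i | sl i) wst (vv lam u i) * (BL dl i - du i).
  by rewrite /F; apply: eq_bigr => i _; rewrite mul0r addr0.
rewrite -F0; apply: le_at_right.
  apply: cvg_at_right_filter; rewrite /F.
  apply: (cvg_sumR sl (fun i t => wst (vv lam u i + t * (a i / c i)) * a i)).
  move=> i; exact: term_cont.
move=> t ht; have /andP[t0 t1] := ht.
have := hopt (fun k => lam k + t * dl k) (fun i => u i + t * du i) (hdu t ht).
rewrite !loss_eq.
have -> : \sum_(i | sl i) c i * rho psi hinv
     (vv (fun k => lam k + t * dl k) (fun i => u i + t * du i) i)
   = \sum_(i | sl i) c i * rho psi hinv (vv lam u i + t * (a i / c i)).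
  apply: eq_bigr => i _; congr (_ * rho _ _ _).
  by rewrite /vv BL_lin /a; field; rewrite gt_eqF.
have -> : \sum_k Bs k * (lam k + t * dl k)
   = \sum_k Bs k * lam k + t * \sum_k Bs k * dl k.
  by rewrite mulr_sumr -big_split; apply: eq_bigr => k _ /=; ring.
have Hsup : \sum_(i | sl i) c i * rho psi hinv (vv lam u i)
   - \sum_(i | sl i) c i * rho psi hinv (vv lam u i + t * (a i / c i)) <= - (t * F t).
  rewrite -sumrB /F mulr_sumr -sumrN; apply: ler_sum => i _.
  have H := rho_super (vv lam u i) (vv lam u i + t * (a i / c i)).
  have := ler_wpM2l (ltW (hc i)) H.
  have -> : c i * ((vv lam u i + t * (a i / c i) - vv lam u i) *
       wst (vv lam u i + t * (a i / c i)))
     = t * (wst (vv lam u i + t * (a i / c i)) * a i).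
    by field; rewrite gt_eqF.
  move=> H2; lra.
have := hM t ht => H3 H4.
have : t * F t <= t * (\sum_k Bs k * dl k + M) by lra.
by rewrite ler_pM2l.
Qed.


Lemma sum_ind (F : 'I_K.+1 -> R) s k : \sum_j F j * (s * (j == k)%:R) = F k * s.
Proof.
rewrite (bigD1 k) //= eqxx mulr1 big1 ?addr0 // => j /negbTE ->.
by rewrite mulr0 mulr0.
Qed.

Lemma hM_gen lam dl t : 0 <= t ->
  \sum_k `|lam k + t * dl k| * delta k - \sum_k `|lam k| * delta k
    <= t * \sum_k `|dl k| * delta k.
Proof.
move=> t0; rewrite -sumrB mulr_sumr; apply: ler_sum => k _.
rewrite -mulrBl mulrA; apply: ler_wpM2r => //.
have := ler_normD (lam k) (t * dl k); rewrite normrM (ger0_norm t0); lra.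
Qed.

Lemma feas_bound (w : I -> R) lam :
  (forall k, `|GG w k - Bs k| <= delta k) ->
  \sum_(i | sl i) w i * BL lam i <= \sum_k Bs k * lam k + \sum_k `|lam k| * delta k.
Proof.
move=> hf; rewrite BL_exchange -big_split; apply: ler_sum => k _ /=.
have : lam k * (GG w k - Bs k) <= `|lam k| * delta k.
  apply: le_trans (ler_norm _) _; rewrite normrM; apply: ler_wpM2l => //.
lra.
Qed.


Section PB.
Variables (lam : 'I_K.+1 -> R) (u : I -> R).
Hypothesis hls : loss_solution S Z X B c delta z psi hinv lam u.

Let W i := wst (vv lam u i).

Lemma D1 i : sl i -> 0 <= W i.
Proof.
move=> si; have [hu _] := hls.
have := @dirG lam u (fun _ => 0) (fun j => (j == i)%:R) 0 hls.
have BL0 : forall j, BL (fun _ => 0) j = 0.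
  by move=> j; rewrite /Blam big1 // => k _; rewrite mulr0.
have E : \sum_(j | sl j) wst (vv lam u j) * (BL (fun _ => 0) j - (j == i)%:R) = - W i.
  rewrite (bigD1 i) //= eqxx BL0 big1 ?addr0; first by rewrite /W /= sub0r mulrN1.
  by move=> j /andP[_ /negbTE ->]; rewrite BL0 subr0 mulr0.
rewrite E; have -> : \sum_k Bs k * 0 = 0 by rewrite big1 // => k _; rewrite mulr0.
rewrite addr0 oppr_le0; apply.
  by move=> t /andP[t0 _] j; apply: addr_ge0 => //; apply: mulr_ge0 => //; exact: ltW.
by move=> t _; rewrite mulr0; under eq_bigr do rewrite addr0; rewrite subrr.
Qed.

Lemma D2 k : `|GG W k - Bs k| <= delta k.
Proof.
have key : forall s, `|s| = 1 -> s * (GG W k - Bs k) <= delta k.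
  move=> s hs.
  have := @dirG lam u (fun j => s * (j == k)%:R) (fun _ => 0) (delta k) hls.
  rewrite sum_ind.
  have -> : \sum_(i | sl i) wst (vv lam u i) * (BL (fun j => s * (j == k)%:R) i - 0)
      = s * GG W k.
    rewrite /GG mulr_sumr; apply: eq_bigr => i _.
    by rewrite /Blam sum_ind /W; ring.
  have H : s * GG W k <= Bs k * s + delta k -> s * (GG W k - Bs k) <= delta k by lra.
  move=> G; apply: H; apply: G.
    by move=> t _ i; rewrite mulr0 addr0; have [] := hls.
  move=> t /andP[t0 _]; apply: le_trans (hM_gen lam _ t (ltW t0)) _.
  rewrite (bigD1 k) //= eqxx mulr1 hs mul1r big1 ?addr0 // => j /negbTE ->.
  by rewrite mulr0 normr0 mul0r.
rewrite ler_norml; apply/andP; split.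
  by have := key (-1); rewrite normrN normr1 => /(_ erefl); lra.
by have := key 1 (normr1 _); lra.
Qed.

Lemma D3 : \sum_(i | sl i) W i * (BL lam i - u i)
   = \sum_k Bs k * lam k + \sum_k `|lam k| * delta k.
Proof.
have key : forall s, -1 <= s <= 1 ->
    s * \sum_(i | sl i) W i * (BL lam i - u i)
    <= s * (\sum_k Bs k * lam k + \sum_k `|lam k| * delta k).
  move=> s /andP[s1 s2].
  have := @dirG lam u (fun k => s * lam k) (fun i => s * u i)
     (s * \sum_k `|lam k| * delta k) hls.
  have -> : \sum_(i | sl i) wst (vv lam u i) * (BL (fun k => s * lam k) i - s * u i)
      = s * \sum_(i | sl i) W i * (BL lam i - u i).
    rewrite mulr_sumr; apply: eq_bigr => i _.
    have -> : BL (fun k => s * lam k) i = s * BL lam i.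
      by rewrite /Blam mulr_sumr; apply: eq_bigr => j _; ring.
    by rewrite /W; ring.
  have -> : \sum_k Bs k * (s * lam k) = s * \sum_k Bs k * lam k.
    by rewrite mulr_sumr; apply: eq_bigr => k _; ring.
  rewrite mulrDr; apply.
    move=> t /andP[t0 t1] i; have [hu _] := hls.
    have -> : u i + t * (s * u i) = (1 + t * s) * u i by ring.
    by apply: mulr_ge0 => //; nra.
  move=> t /andP[t0 t1].
  have hp : 0 <= 1 + t * s by nra.
  have -> : \sum_k `|lam k + t * (s * lam k)| * delta k
      = (1 + t * s) * \sum_k `|lam k| * delta k.
    rewrite mulr_sumr; apply: eq_bigr => k _.
    have -> : lam k + t * (s * lam k) = (1 + t * s) * lam k by ring.
    by rewrite normrM (ger0_norm hp); ring.
  lra.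
have a1 : -1 <= (1:R) <= 1 by apply/andP; split; lra.
have a2 : -1 <= (-1:R) <= 1 by apply/andP; split; lra.
have h1 := key 1 a1; have h2 := key (-1) a2.
apply/le_anti/andP; split; lra.
Qed.


Lemma CS i : sl i -> W i * u i = 0.
Proof.
move=> si; have [hu _] := hls.
have hWfeas := feas_bound W lam D2.
have E := D3.
have E2 : \sum_(j | sl j) W j * (BL lam j - u j)
   = \sum_(j | sl j) W j * BL lam j - \sum_(j | sl j) W j * u j.
  by rewrite -sumrB; apply: eq_bigr => j _; ring.
have Hsum : \sum_(j | sl j) W j * u j <= 0 by lra.
have nn : forall j, sl j -> 0 <= W j * u j.
  by move=> j sj; apply: mulr_ge0; [exact: D1 | exact: hu].
have : W i * u i <= \sum_(j | sl j) W j * u j.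
  rewrite (bigD1 i) //= lerDl; apply: sumr_ge0 => j /andP[sj _]; exact: nn.
move=> H; apply/le_anti/andP; split; [lra | exact: nn].
Qed.

Lemma partB_main (w : I -> R) : primal_solution S Z X B c delta z psi w ->
  forall i, S i -> Z i = z ->
    let r := - hinv (BL lam i / c i) in w i = r * ((0 < r)%R : bool)%:R.
Proof.
move=> [[pfk pfi] popt] i Si Zi r.
have [hu _] := hls.
have si : sl i by rewrite /sel Si Zi eqxx.
have hWf : primal_feasible S Z X B delta z W.
  by split; [move=> k; exact: D2 | move=> j sj; exact: D1].
have hPle := popt W hWf.
have wfb := feas_bound w lam pfk.
have E3 := D3.
have Qw : \sum_(j | sl j) c j * (psi (w j) + vv lam u j * w j)
   = primal_obj S Z c z psi w + \sum_(j | sl j) w j * BL lam j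
     - \sum_(j | sl j) u j * w j.
  rewrite /primal_obj -big_split -sumrB /=; apply: eq_bigr => j _; rewrite /vv.
  by field; rewrite gt_eqF.
have QW : \sum_(j | sl j) c j * (psi (W j) + vv lam u j * W j)
   = primal_obj S Z c z psi W + \sum_(j | sl j) W j * (BL lam j - u j).
  rewrite /primal_obj -big_split /=; apply: eq_bigr => j _; rewrite /vv.
  by field; rewrite gt_eqF.
have uw : 0 <= \sum_(j | sl j) u j * w j.
  by apply: sumr_ge0 => j sj; apply: mulr_ge0; [exact: hu | exact: pfi].
have Hdiff : \sum_(j | sl j) (c j * (psi (w j) + vv lam u j * w j)
     - c j * (psi (W j) + vv lam u j * W j)) <= 0.
  rewrite sumrB; lra.
have tnn : forall j, sl j -> 0 <= c j * (psi (w j) + vv lam u j * w j)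
     - c j * (psi (W j) + vv lam u j * W j).
  move=> j sj; rewrite subr_ge0 ler_pM2l //.
  by rewrite /W -rho_eq rho_min.
have wW : w i = W i.
  apply/eqP; apply/negPn/negP => ne.
  have : 0 < c i * (psi (w i) + vv lam u i * w i)
     - c i * (psi (W i) + vv lam u i * W i).
    by rewrite subr_gt0 ltr_pM2l // /W -rho_eq rho_min_strict.
  have : c i * (psi (w i) + vv lam u i * w i)
     - c i * (psi (W i) + vv lam u i * W i) <= \sum_(j | sl j) (c j * (psi (w j) + vv lam u j * w j)
     - c j * (psi (W j) + vv lam u j * W j)).
    rewrite (bigD1 i) //= lerDl; apply: sumr_ge0 => j /andP[sj _]; exact: tnn.
  lra.
rewrite wW /r.
have := hu i; rewrite le_eqVlt => /orP[/eqP u0|upos].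
- have := D1 i si; rewrite /W /wst /vv -u0 subr0 => h0.
  case: (boolP (0 < - hinv (BL lam i / c i))) => hp /=; first by rewrite mulr1.
  have -> : - hinv (BL lam i / c i) = 0.
    by apply/le_anti; rewrite h0 andbT leNgt hp.
  by rewrite mul0r.
- have W0 : W i = 0.
    by have := CS i si; move/eqP; rewrite mulf_eq0 (gt_eqF upos) orbF => /eqP.
  have hv : vv lam u i < BL lam i / c i.
    rewrite /vv ltr_pM2r ?invr_gt0 //; lra.
  have := hinv_lt _ _ hv; move: W0; rewrite /W /wst => /eqP; rewrite oppr_eq0 => /eqP ->.
  move=> hp.
  have hf : (0 < - hinv (BL lam i / c i)) = false.
    by apply/negbTE; rewrite -leNgt oppr_le0 ltW.
  by rewrite hf mulr0 oppr0.
Qed.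

End PB.
End B.

Theorem theoremS2 (R : realType) (I : finType) (T : Type) (K : nat)
    (S Z : I -> bool) (X : I -> T) (B : 'I_K.+1 -> T -> R)
    (c : I -> R) (delta : 'I_K.+1 -> R) (z : bool)
    (psi hinv : R -> R)
    (hB1 : forall x, B ord0 x = 1)
    (hdelta : forall k, 0 <= delta k)
    (hdelta1 : delta ord0 = 0)
    (hc : forall i, 0 < c i)
    (hconv : forall (x y t : R), 0 <= t <= 1 ->
        psi (t * x + (1 - t) * y) <= t * psi x + (1 - t) * psi y)
    (hdiff1 : forall x, derivable psi x 1)
    (hdiff2 : forall x, derivable (derive1 psi) x 1)
    (hinvertible : bijective (derive1 psi))
    (hinv_l : cancel (derive1 (hfun psi)) hinv)
    (hinv_r : cancel hinv (derive1 (hfun psi))) :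
  (* (a) the Lagrange dual of (P_c) is equivalent to the L1-regularized loss
     minimization, with lambda = al - be *)
  (dual_value S Z X B c delta z psi = - loss_value S Z X B c delta z psi hinv)%E
  /\ (forall al be u, dual_solution S Z X B c delta z psi al be u ->
        loss_solution S Z X B c delta z psi hinv (fun k => al k - be k) u)
  /\ (forall lam u, loss_solution S Z X B c delta z psi hinv lam u ->
        dual_solution S Z X B c delta z psi
          (fun k => Num.max (lam k) 0) (fun k => Num.max (- lam k) 0) u)
  (* (b) primal solution recovered from a dual solution; rho'(v) = - hinv v *)
  /\ (forall (w : I -> R) (lam : 'I_K.+1 -> R) (u : I -> R),
        primal_solution S Z X B c delta z psi w ->
        loss_solution S Z X B c delta z psi hinv lam u ->
        forall i, S i -> Z i = z ->
          let r := - hinv (Blam X B lam i / c i) in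
          w i = r * ((0 < r)%R : bool)%:R).
Proof.
split; first by apply: partA1.
split.
  by move=> al be u; apply: partA2.
split.
  by move=> lam u; apply: partA3.
move=> w lam u hw hls.
exact: (@partB_main _ psi hinv hconv hdiff1 hinv_l hinv_r _ _ _ S Z X B c delta z
  hdelta hc lam u hls w hw).
Qed.
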